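(* Let $\mathcal{R}=(G_0,e\to R)$ be an expanding replacement system with rearrangement group $\mathcal{G}$ of $X(G_0)$. The action of $\mathcal{G}$ on the directed graph $K^1(\mathcal{G})$ is proper; in particular, for any vertex $[f]$ of $K^1(\mathcal{G})$ with $f\colon X(G_0)\to X(G)$, the stabilizer of $[f]$ in $\mathcal{G}$ is isomorphic to the automorphism group of the directed graph $G$.
   Context: A graph is a finite directed multigraph (loops, multiple edges allowed); isomorphisms preserve directions. The replacement rule $e\to R$: $e$ a non-loop edge from $v$ to $w$, $R$ a graph containing $v,w$ (initial, terminal vertices). Replacing an edge $\varepsilon$ of a graph $G$: delete $\varepsilon$, glue in a copy of $R$ identifying initial/terminal vertices with those of $\varepsilon$; new edges $\varepsilon\zeta$ ($\zeta\in E(R)$). For a set $S$ of edges of $G$, $G\triangleleft S$ is obtained by replacing each edge of $S$; an expansion of $G$ is a graph obtained by finitely many replacements. $\mathcal{R}$ expanding means: $G_0$ and $R$ have no isolated vertices, initial and terminal vertices of $R$ are not adjacent, $R$ has $\ge3$ vertices and $\ge2$ edges. For any graph $G$, $X(G)$ is the limit space of $(G,e\to R)$: $X(G)=\Omega_G/\sim$ where $\Omega_G=E(G)\times E(R)^{\mathbb{N}}$ and $\varepsilon_0\varepsilon_1\cdots\sim\varepsilon_0'\varepsilon_1'\cdots$ iff for all $n$ the edges $\varepsilon_0\cdots\varepsilon_n$, $\varepsilon_0'\cdots\varepsilon_n'$ of the $n$-fold full expansion of $G$ share a vertex. For an edge $\epsilon$ of an expansion of $G$, the cell $C(\epsilon)\subseteq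 X(G)$ is the image of the sequences with prefix $\epsilon$. For cells $C(\epsilon)\subseteq X(G)$, $C(\epsilon')\subseteq X(G')$ with $\epsilon,\epsilon'$ both loops or both non-loops, the canonical homeomorphism is induced by $\epsilon\zeta_1\zeta_2\cdots\mapsto\epsilon'\zeta_1\zeta_2\cdots$. A rearrangement $X(G)\to X(G')$ is a homeomorphism restricting to canonical homeomorphisms on the cells of some finite cover of $X(G)$ by cells with disjoint interiors (interior = cell minus images of endpoints of $\epsilon$); $\mathcal{G}$ is the group of rearrangements $X(G_0)\to X(G_0)$. For a graph isomorphism $\varphi\colon G_1\to G_2$, the base isomorphism $X(G_1)\to X(G_2)$ maps each $C(\epsilon)$ ($\epsilon\in E(G_1)$) canonically onto $C(\varphi(\epsilon))$. $x_S\colon X(G)\to X(G\triangleleft S)$ is the rearrangement mapping each cell $C(\epsilon)\subseteq X(G)$, $\epsilon$ an edge of $G\triangleleft S$, canonically onto the cell $C(\epsilon)\subseteq X(G\triangleleft S)$. A simple expansion morphism is $\varphi\circ x_{\{\epsilon\}}$ with $\varphi$ a base isomorphism. Rearrangements $f\colon X(G)\to X(G_1)$ and $g\colon X(G)\to X(G_2)$ are range equivalent if $g=\varphi\circ f$ for a base isomorphism $\varphi$; $[f]$ is the class. $K^1(\mathcal{G})$ is the directed graph whose vertices are range-equivalence classes of rearrangements with domain $X(G_0)$, with an edge from $[f]$ to $[g]$ when $g=x\circ f$ for some simple expansion morphism $x$. $\mathcal{G}$ acts by $[f]\cdot g=[f\circ g]$. *)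

(* Defs.v *)
From HB Require Import structures.
From mathcomp Require Import all_boot.

Set Implicit Arguments.
Unset Strict Implicit.
Unset Printing Implicit Defensive.

Record graph := Graph {
  V : finType;
  E : finType;
  src : E -> V;
  tgt : E -> V
}.

Definition isolated (G : graph) (x : V G) : Prop :=
  forall e : E G, src e <> x /\ tgt e <> x.

Definition no_isolated (G : graph) : Prop := forall x : V G, ~ isolated x.

Definition is_iso (G1 G2 : graph) (fv : V G1 -> V G2) (fe : E G1 -> E G2) : Prop :=
  [/\ bijective fv, bijective fe,
      forall e, src (fe e) = fv (src e) & forall e, tgt (fe e) = fv (tgt e)].

(* Replacement systems  (G0, e -> R), with iv, tv the initial and      *)
(* terminal vertices of R (the endpoints v, w of the edge e).          *)
Record rsystem := RSys {
  G0 : graph;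
  Rg : graph;
  iv : V Rg;
  tv : V Rg
}.

Definition adjacent (G : graph) (x y : V G) : Prop :=
  exists e : E G, (src e = x /\ tgt e = y) \/ (src e = y /\ tgt e = x).

Definition expanding (S : rsystem) : Prop :=
  [/\ iv S <> tv S,                    (* e is a non-loop edge *)
      no_isolated (G0 S) /\ no_isolated (Rg S),
      ~ adjacent (iv S) (tv S),
      3 <= #|V (Rg S)| & 2 <= #|E (Rg S)| ].

Section Limit.
Variable S : rsystem.
Local Notation R := (Rg S).

(* Edges of expansions of G: words  e zeta_1 ... zeta_k. *)
Definition word (G : graph) := (E G * seq (E R))%type.

(* Vertices of expansions of G: vertices of G, or copies of interior   *)
(* vertices u of R created when replacing the edge (word) alpha.       *)
Inductive xvert (G : graph) :=
  | Base of V G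
  | Inner of word G & V R.

(* Endpoints of the edge  e (rev rs) of an expansion of G;  b = true   *)
(* for the initial vertex, b = false for the terminal vertex.          *)
Fixpoint xend_rev (G : graph) (b : bool) (e : E G) (rs : seq (E R)) : xvert G :=
  match rs with
  | [::] => @Base G (if b then src e else tgt e)
  | z :: rs' =>
      let u := if b then src z else tgt z in
      if u == iv S then xend_rev true e rs'
      else if u == tv S then xend_rev false e rs'
      else Inner (e, rev rs') u
  end.

Definition xend (G : graph) (b : bool) (w : word G) : xvert G :=
  xend_rev b w.1 (rev w.2).

Definition share (G : graph) (w w' : word G) : Prop :=
  exists b b', xend b w = xend b' w'.

Definition is_loop (G : graph) (w : word G) : Prop := xend true w = xend false w.

Definition Omega (G : graph) := (E G * (nat -> E R))%type.

(* The edge  w_0 w_1 ... w_n  of the n-fold full expansion. *)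
Definition prefix (G : graph) (n : nat) (w : Omega G) : word G :=
  (w.1, mkseq w.2 n).

Definition gluing (G : graph) (w w' : Omega G) : Prop :=
  forall n, share (prefix n w) (prefix n w').

(* X(G) = Omega_G / ~ : a point is an equivalence class. *)
Definition pt (G : graph) := {c : Omega G -> Prop | exists w, c = gluing w}.

Definition cls (G : graph) (w : Omega G) : pt G :=
  exist _ (gluing w) (ex_intro _ w erefl).

(* Quotient topology of the product topology (E(G), E(R) discrete). *)
Definition open_pt (G : graph) (U : pt G -> Prop) : Prop :=
  forall w, U (cls w) ->
    exists n, forall w', prefix n w' = prefix n w -> U (cls w').

Definition continuous_pt (G G' : graph) (f : pt G -> pt G') : Prop :=
  forall U, open_pt U -> open_pt (fun p => U (f p)).

Definition homeomorphism (G G' : graph) (f : pt G -> pt G') : Prop :=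
  exists g : pt G' -> pt G,
    [/\ cancel f g, cancel g f, continuous_pt f & continuous_pt g].

Definition wconcat (G : graph) (w : word G) (z : nat -> E R) : Omega G :=
  (w.1, fun i => if i < size w.2 then nth (z i) w.2 i else z (i - size w.2)).

Definition cell (G : graph) (w : word G) (p : pt G) : Prop :=
  exists z, p = cls (wconcat w z).

(* Image in X(G) of a vertex x of an expansion of G: the point given by *)
(* sequences all of whose (long enough) prefixes are incident to x.     *)
Definition vimg (G : graph) (x : xvert G) (p : pt G) : Prop :=
  exists w, p = cls w /\
    exists N, forall n, N <= n -> exists b, xend b (prefix n w) = x.

Definition interior (G : graph) (w : word G) (p : pt G) : Prop :=
  cell w p /\ ~ (exists b, vimg (xend b w) p).

Definition rearrangement (G G' : graph) (f : pt G -> pt G') : Prop :=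
  homeomorphism f /\
  exists (k : nat) (c : 'I_k -> word G * word G'),
    [/\ forall p, exists i, cell (c i).1 p,
        forall i j, i != j -> forall p, ~ (interior (c i).1 p /\ interior (c j).1 p),
        forall i, is_loop (c i).1 <-> is_loop (c i).2
      & forall i z, f (cls (wconcat (c i).1 z)) = cls (wconcat (c i).2 z)].

Definition base_iso (G1 G2 : graph) (b : pt G1 -> pt G2) : Prop :=
  exists (fv : V G1 -> V G2) (fe : E G1 -> E G2),
    is_iso fv fe /\ forall e z, b (cls (e, z)) = cls (fe e, z).

Definition range_equiv (G G1 G2 : graph) (f : pt G -> pt G1) (g : pt G -> pt G2) : Prop :=
  exists b : pt G1 -> pt G2, base_iso b /\ g = b \o f.

(* Stabilizer in the rearrangement group of the vertex [f] of K^1:     *)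
(* rearrangements g of X(G0) with [f] . g = [f o g] = [f].              *)
Definition stab (G : graph) (f : pt (G0 S) -> pt G) (g : pt (G0 S) -> pt (G0 S)) : Prop :=
  rearrangement g /\ range_equiv (f \o g) f.

End Limit.

(* Main.v *)
Require Import Defs.
From mathcomp Require Import all_boot zify.
From Stdlib Require Import Classical ClassicalEpsilon FunctionalExtensionality PropExtensionality ProofIrrelevance.

Set Implicit Arguments.
Unset Strict Implicit.
Unset Printing Implicit Defensive.

Module W1.


Section Words.
Variable S : rsystem.
Local Notation R := (Rg S).

Lemma xend_rcons (G : graph) b (e : E G) (s : seq (E R)) z :
  xend b ((e, rcons s z) : word S G) =
  (let u := if b then src z else tgt z in
   if u == iv S then xend true ((e, s) : word S G)
   else if u == tv S then xend false ((e, s) : word S G)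
   else Inner (e, s) u).
Proof. by rewrite /xend /= rev_rcons /= revK. Qed.

Lemma xend_tag (G : graph) b (e : E G) (s : seq (E R)) :
  (exists x, xend b ((e, s) : word S G) = Base S x) \/
  exists k x, k < size s /\ xend b ((e, s) : word S G) = Inner (e, take k s) x.
Proof.
elim/last_ind: s b => [|s z IH] b; first by left; eexists.
rewrite xend_rcons /=.
have H : forall b', (exists x, xend b' ((e, s) : word S G) = Base S x) \/
  exists k x, k < size (rcons s z) /\ xend b' ((e, s) : word S G) = Inner (e, take k (rcons s z)) x.
  move=> b'; case: (IH b') => [h|[k [x [hk h]]]]; first by left.
  right; exists k, x; split; first by rewrite size_rcons ltnS ltnW.
  by rewrite -cats1 takel_cat ?(ltnW hk).
case: ifP => _; first exact: H.
case: ifP => _; first exact: H.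
right; exists (size s), (if b then src z else tgt z); split; first by rewrite size_rcons.
by rewrite -cats1 take_size_cat.
Qed.

Lemma xend_ext (G : graph) b (e : E G) (s t : seq (E R)) :
  (exists k x, k < size t /\ xend b ((e, s ++ t) : word S G) = Inner (e, s ++ take k t) x) \/
  exists b', xend b ((e, s ++ t) : word S G) = xend b' ((e, s) : word S G).
Proof.
elim/last_ind: t b => [|t z IH] b; first by right; exists b; rewrite cats0.
rewrite -rcons_cat xend_rcons /=.
have H : forall b', (exists k x, k < size (rcons t z) /\ xend b' ((e, s ++ t) : word S G) = Inner (e, s ++ take k (rcons t z)) x) \/
  exists b'', xend b' ((e, s ++ t) : word S G) = xend b'' ((e, s) : word S G).
  move=> b'; case: (IH b') => [[k [x [hk h]]]|h]; last by right.
  left; exists k, x; split; first by rewrite size_rcons ltnS ltnW.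
  by rewrite -cats1 takel_cat ?(ltnW hk).
case: ifP => _; first exact: H.
case: ifP => _; first exact: H.
left; exists (size t), (if b then src z else tgt z); split; first by rewrite size_rcons.
by rewrite -cats1 take_size_cat.
Qed.

Lemma tag_size (G : graph) b (e : E G) (s : seq (E R)) (w : word S G) x :
  xend b ((e, s) : word S G) = Inner w x -> size w.2 < size s.
Proof.
case: (xend_tag b e s) => [[y ->]|[k [y [hk ->]]]]; first by [].
move=> [] <- _ /=.
by rewrite size_take hk.
Qed.


Lemma deep2 (z z2 : E R) :
  (forall b : bool, (if b then src z2 else tgt z2) = iv S -> (src z != iv S) && (src z != tv S)) ->
  (forall b : bool, (if b then src z2 else tgt z2) = tv S -> (tgt z != iv S) && (tgt z != tv S)) ->
  forall (G : graph) b (e : E G) s, exists k x, k < size [:: z; z2] /\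
    xend b ((e, s ++ [:: z; z2]) : word S G) = Inner (e, s ++ take k [:: z; z2]) x.
Proof.
move=> H1 H2 G b e s.
rewrite (_ : s ++ [:: z; z2] = rcons (rcons s z) z2); last by rewrite -!cats1 -catA.
rewrite xend_rcons /=.
case: eqP => E1.
  move/andP: (H1 b E1) => [n1 n2].
  exists 0, (src z); split => //.
  by rewrite xend_rcons /= (negbTE n1) (negbTE n2) cats0.
case: eqP => E2.
  move/andP: (H2 b E2) => [n1 n2].
  exists 0, (tgt z); split => //.
  by rewrite xend_rcons /= (negbTE n1) (negbTE n2) cats0.
by exists 1, (if b then src z2 else tgt z2); split => //; rewrite /= cats1.
Qed.

Lemma edge_at (G : graph) (x : V G) : ~ isolated x -> exists e : E G, src e = x \/ tgt e = x.
Proof.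
move=> H; apply: NNPP => H'; apply: H => e; split => h; apply: H'; exists e; by [left|right].
Qed.

Lemma deep : expanding S -> exists r : seq (E R), forall (G : graph) b (e : E G) s, exists k x,
   k < size r /\ xend b ((e, s ++ r) : word S G) = Inner (e, s ++ take k r) x.
Proof.
case=> nivtv [_ noR] nadj card3 _.
have [u Hu] : exists u : V R, (u != iv S) && (u != tv S).
  case: (pickP (fun u : V R => (u != iv S) && (u != tv S))) => [u Hu|H]; first by exists u.
  exfalso; have : #|V R| <= 2.
    rewrite -cardsT; apply: leq_trans (_ : #|[set iv S; tv S]| <= 2); last first.
      by rewrite cards2; case: (_ == _).
    apply: subset_leq_card; apply/subsetP => x _; rewrite !inE.
    by move: (H x) => /= /negbT; rewrite negb_and !negbK.
  by rewrite leqNgt (leq_trans _ card3).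
have [z Hz] := edge_at (noR u).
have [zi Hzi] := edge_at (noR (iv S)).
have [zt Hzt] := edge_at (noR (tv S)).
have Hadj : forall y : E R, src y = iv S -> tgt y = tv S -> False.
  by move=> y h1 h2; apply: nadj; exists y; left.
have Hadj' : forall y : E R, src y = tv S -> tgt y = iv S -> False.
  by move=> y h1 h2; apply: nadj; exists y; right.
case Es: ((src z != iv S) && (src z != tv S)).
  exists [:: z; zi] => G b e s; apply: deep2 => // b' Hb'.
  exfalso; case: b' Hb' => /= Hb'; case: Hzi => Hzi.
  - by apply: nivtv; rewrite -Hzi -Hb'.
  - exact: Hadj' Hb' Hzi.
  - exact: Hadj Hzi Hb'.
  - by apply: nivtv; rewrite -Hzi -Hb'.
have Ht : (tgt z != iv S) && (tgt z != tv S).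
  case: Hz => Hz; last by rewrite Hz.
  by move: Es Hu; rewrite Hz => ->.
exists [:: z; zt] => G b e s; apply: deep2 => // b' Hb'.
exfalso; case: b' Hb' => /= Hb'; case: Hzt => Hzt.
- by apply: nivtv; rewrite -Hzt -Hb'.
- exact: Hadj Hb' Hzt.
- exact: Hadj' Hzt Hb'.
- by apply: nivtv; rewrite -Hzt -Hb'.
Qed.

Lemma vclass (a : V R) : a = iv S \/ a = tv S \/ (a != iv S) && (a != tv S).
Proof. by case: (eqVneq a (iv S)); [left|case: (eqVneq a (tv S)); [right; left|right; right; apply/andP]]. Qed.

Lemma loop_rcons : expanding S -> forall (G : graph) (e : E G) s z,
  is_loop ((e, rcons s z) : word S G) <-> src z = tgt z.
Proof.
case=> nivtv _ nadj _ _ G e s z; rewrite /is_loop !xend_rcons /=.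
have ntv : (tv S == iv S) = false by apply/eqP => h; apply: nivtv.
have Hadj : src z = iv S -> tgt z = tv S -> False.
  by move=> h1 h2; apply: nadj; exists z; left.
have Hadj' : src z = tv S -> tgt z = iv S -> False.
  by move=> h1 h2; apply: nadj; exists z; right.
have T : forall b x, xend b ((e, s) : word S G) <> Inner (e, s) x.
  by move=> b x /tag_size; rewrite ltnn.
case: (vclass (src z)) => [A|[A|/andP[A1 A2]]];
case: (vclass (tgt z)) => [B|[B|/andP[B1 B2]]];
  rewrite ?A ?B ?eqxx ?ntv ?(negbTE A1) ?(negbTE A2) ?(negbTE B1) ?(negbTE B2).
- by [].
- by exfalso; exact: Hadj.
- split => h; [exfalso; exact: T h | by move: B1; rewrite -h eqxx].
- by exfalso; exact: Hadj'.
- by [].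
- split => h; [exfalso; exact: T h | by move: B2; rewrite -h eqxx].
- split => h; [exfalso; exact: T (esym h) | by move: A1; rewrite h eqxx].
- split => h; [exfalso; exact: T (esym h) | by move: A2; rewrite h eqxx].
- by split => [[]|->].
Qed.

Definition app (s : seq (E R)) (z : nat -> E R) : nat -> E R :=
  fun i => if i < size s then nth (z i) s i else z (i - size s).

Lemma app_cat s t z : app (s ++ t) z = app s (app t z).
Proof.
apply: functional_extensionality => i; rewrite /app size_cat nth_cat.
case: (ltnP i (size s)) => h1.
  by rewrite (ltn_addr _ h1); apply: set_nth_default.
idtac.
case: (ltnP (i - size s) (size t)) => h2.
  by rewrite -(subnKC h1) ltn_add2l h2 addKn; apply: set_nth_default.
by rewrite -(subnKC h1) ltn_add2l ltnNge h2 /= addKn subnKC // subnDA.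
Qed.

Lemma wconcat_cat (G : graph) (w : word S G) t z :
  wconcat ((w.1, w.2 ++ t) : word S G) z = wconcat w (app t z).
Proof. by rewrite /wconcat /= -/(app (w.2 ++ t) z) app_cat. Qed.

Lemma mkseq_app s z n : size s <= n -> mkseq (app s z) n = s ++ mkseq z (n - size s).
Proof.
move=> hn; rewrite /mkseq -(subnKC hn) iotaD map_cat add0n addKn.
congr (_ ++ _).
  rewrite -[RHS](mkseq_nth (z 0) s) /mkseq; apply/eq_in_map => i.
  rewrite mem_iota add0n /app => /= h; rewrite h; exact: set_nth_default.
rewrite (_ : iota (size s) _ = map (addn (size s)) (iota 0 (n - size s))); last by rewrite -iotaDl addn0.
rewrite -map_comp; apply: eq_map => i /=; rewrite /app ltnNge leq_addr /=.
by rewrite addKn.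
Qed.

Lemma prefix_wconcat (G : graph) (w : word S G) z n : size w.2 <= n ->
  Defs.prefix n (wconcat w z) = ((w.1, w.2 ++ mkseq z (n - size w.2)) : word S G).
Proof. by move=> h; rewrite /Defs.prefix /= -/(app w.2 z) mkseq_app. Qed.

Lemma wconcat_prefix (G : graph) (w : Omega S G) n :
  wconcat (Defs.prefix n w) (fun i => w.2 (i + n)) = w.
Proof.
case: w => e z; rewrite /wconcat /Defs.prefix /=; congr (_, _).
apply: functional_extensionality => i; rewrite size_mkseq.
by case: ltnP => h; [rewrite nth_mkseq | rewrite subnK].
Qed.

Lemma prefixS (G : graph) (w : Omega S G) n :
  Defs.prefix n.+1 w = ((w.1, rcons (Defs.prefix n w).2 (w.2 n)) : word S G).
Proof. by rewrite /Defs.prefix /= mkseqS. Qed.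

Lemma gluing_refl (G : graph) (w : Omega S G) : gluing w w.
Proof. by move=> n; exists true, true. Qed.

Lemma cls_eq (G : graph) (w w' : Omega S G) : gluing w = gluing w' -> cls w = cls w'.
Proof.
by rewrite /cls => h; apply: subset_eq_compat.
Qed.

Lemma cls_glue (G : graph) (w w' : Omega S G) : cls w = cls w' -> gluing w w'.
Proof.
move=> /(congr1 (@proj1_sig _ _)) /= h.
by rewrite h; apply: gluing_refl.
Qed.

Lemma pt_cls (G : graph) (p : pt S G) : exists w, p = cls w.
Proof.
case: p => c [w hw]; exists w; rewrite /cls.
by apply: subset_eq_compat.
Qed.

Lemma generic : expanding S -> forall (G : graph) (u : word S G), exists z,
  forall (v : word S G) y, size v.2 <= size u.2 -> cls (wconcat u z) = cls (wconcat v y) ->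
  v.1 = u.1 /\ v.2 = take (size v.2) u.2.
Proof.
move=> ex G u; have [r Hr] := deep ex.
case: r Hr => [|zz r'] Hr.
  by have [k [x [hk _]]] := Hr G true u.1 [::].
set r := zz :: r' in Hr *.
exists (app r (fun _ => zz)) => v y hv heq.
have hg := cls_glue heq (size u.2 + size r).
move: hg => [b [b' E]].
rewrite -wconcat_cat !prefix_wconcat /= ?size_cat // in E; last by rewrite (leq_trans hv) // leq_addr.
rewrite subnn cats0 in E.
have [k [x [hk Ex]]] := Hr G b u.1 u.2.
rewrite Ex in E.
case: (xend_tag b' v.1 (v.2 ++ mkseq y (size u.2 + size r - size v.2))) => [[x' E']|[k' [x' [hk' E']]]].
  by rewrite E' in E.
rewrite E' in E; case: E => E1 E2 _.
split; first by [].
have hk'' : size v.2 <= k'.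
  have := congr1 size E2; rewrite size_takel ?(ltnW hk') // size_cat => <-.
  exact: leq_trans hv (leq_addr _ _).
have := congr1 (take (size v.2)) E2.
by rewrite takel_cat // take_takel // take_size_cat.
Qed.

Lemma xend_rcons_back (G : graph) b b1 (e e0 : E G) s s0 z :
  size s0 <= size s ->
  xend b ((e, rcons s z) : word S G) = xend b1 ((e0, s0) : word S G) ->
  exists b', xend b' ((e, s) : word S G) = xend b1 ((e0, s0) : word S G).
Proof.
move=> hs; rewrite xend_rcons /=.
case: eqP => _; first by exists true.
case: eqP => _; first by exists false.
move=> /esym /tag_size /=; rewrite ltnNge hs //.
Qed.

Lemma interior_disj (G : graph) (d d' : word S G) : size d.2 = size d'.2 -> d <> d' ->
  forall p, interior d p -> interior d' p -> False.
Proof.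
case: d => e s; case: d' => e' s' /= hs hne.
move=> p [[z hz] hi] [[z' hz'] _].
have hg : gluing (wconcat (e, s) z) (wconcat (e', s') z') by apply: cls_glue; rewrite -hz -hz'.
set W := wconcat (e, s) z in hz hg *.
set D := size s.
pose T n b1 := exists b, xend b (Defs.prefix n W) = xend b1 ((e, s) : word S G).
have touch : forall n, D <= n -> exists b1, T n b1.
  move=> n hn; have [b [b' E]] := hg n.
  have hn' : size s' <= n by rewrite -hs.
  rewrite /W !prefix_wconcat //= in E.
  case: (xend_ext b e s (mkseq z (n - size s))) => [[k [x [hk Ex]]]|[b1 Ex]]; last first.
    by exists b1, b; rewrite /W prefix_wconcat.
  case: (xend_ext b' e' s' (mkseq z' (n - size s'))) => [[k' [x' [hk' Ex']]]|[b2 Ex']].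
    rewrite Ex Ex' in E; case: E => E1 E2 _; exfalso; apply: hne.
    have := congr1 (take (size s)) E2; rewrite take_size_cat // hs take_size_cat // => ->.
    by rewrite E1.
  rewrite Ex Ex' in E; have := tag_size (esym E); rewrite /= size_cat -hs.
  by rewrite ltnNge leq_addr.
have mono : forall n b1, D <= n -> T n.+1 b1 -> T n b1.
  move=> n b1 hn [b Eb]; rewrite prefixS in Eb.
  apply: (xend_rcons_back (s0 := s)) Eb.
  by rewrite /Defs.prefix /= size_mkseq.
case: (classic (forall n, D <= n -> T n true)) => [H|H].
  by apply: hi; exists true, W; split => //; exists D.
have [N HN] : exists N, D <= N /\ ~ T N true.
  apply: NNPP => H'; apply: H => n hn; apply: NNPP => H''; apply: H'; by exists n.
have notT : forall n, N <= n -> ~ T n true.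
  elim=> [|n IH] hn.
    by move: hn; rewrite leqn0 => /eqP <-; case: HN.
  case: (eqVneq n.+1 N) => [E0|hne']; first by rewrite E0; case: HN.
  have hn' : N <= n by rewrite -ltnS ltn_neqAle eq_sym hne' hn.
  move=> hT; apply: (IH hn'); apply: mono hT.
  by apply: leq_trans hn'; case: HN.
apply: hi; exists false, W; split => //; exists N => n hn.
have hDn : D <= n by apply: leq_trans hn; case: HN.
have [[|] hT] := touch n hDn; last by [].
by exfalso; exact: notT hn hT.
Qed.

End Words.

End W1.
Import W1.

Module W2.


Section Auto.
Variable S : rsystem.
Local Notation R := (Rg S).
Variable G : graph.

Definition mapx (fv : V G -> V G) (fe : E G -> E G) (x : xvert S G) : xvert S G :=
  match x with
  | Base y => Base S (fv y)
  | Inner w u => Inner (fe w.1, w.2) u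
  end.

Lemma xend_map (fv : V G -> V G) (fe : E G -> E G) : is_iso fv fe -> forall b e s,
  xend b ((fe e, s) : word S G) = mapx fv fe (xend b ((e, s) : word S G)).
Proof.
case=> _ _ hs ht b e s; elim/last_ind: s b => [|s z IH] b.
  by case: b; rewrite /xend /= ?hs ?ht.
by rewrite !xend_rcons /=; case: eqP => _; [|case: eqP => _].
Qed.

Lemma mapx_inj (fv : V G -> V G) (fe : E G -> E G) : is_iso fv fe -> injective (mapx fv fe).
Proof.
case=> /bij_inj iv' /bij_inj ie _ _ [x|[e s] u] [y|[e' s'] u'] //=.
- by case=> /iv' ->.
- by case=> /ie -> -> ->.
Qed.

Definition omap (fe : E G -> E G) (w : Omega S G) : Omega S G := (fe w.1, w.2).

Lemma gluing_map (fv : V G -> V G) (fe : E G -> E G) : is_iso fv fe -> forall w w',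
  gluing (omap fe w) (omap fe w') <-> gluing w w'.
Proof.
move=> h w w'; split => H n; have [b [b' E]] := H n; exists b, b'.
- move: E; rewrite /Defs.prefix /= !(xend_map h) => /(mapx_inj h).
  by case: w {H} => e z; case: w' => e' z'.
- by rewrite /Defs.prefix /= !(xend_map h) /=; move: E; case: w {H} => e z; case: w' => e' z' /= ->.
Qed.

Definition rep (p : pt S G) : Omega S G := proj1_sig (constructive_indefinite_description _ (pt_cls p)).

Lemma rep_cls p : p = cls (rep p).
Proof. exact: (proj2_sig (constructive_indefinite_description _ (pt_cls p))). Qed.

Definition bmap (fe : E G -> E G) (p : pt S G) : pt S G := cls (omap fe (rep p)).

Lemma bmap_cls (fv : V G -> V G) (fe : E G -> E G) : is_iso fv fe -> forall w, bmap fe (cls w) = cls (omap fe w).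
Proof.
move=> h w; rewrite /bmap; set w' := rep (cls w).
have hw : cls w = cls w' by apply: rep_cls.
have hg : gluing w = gluing w' by move: hw => /(congr1 (@proj1_sig _ _)).
have [ge c1 c2] : bijective fe by case: h.
apply: cls_eq; apply: functional_extensionality => v.
have -> : v = omap fe (ge v.1, v.2) by rewrite /omap /= c2; case: v.
apply: propositional_extensionality.
by rewrite !(gluing_map h) hg.
Qed.

Lemma bmap_base (fv : V G -> V G) (fe : E G -> E G) : is_iso fv fe -> base_iso (bmap fe).
Proof. by move=> h; exists fv, fe; split => // e z; rewrite (bmap_cls h). Qed.

Lemma base_eq (fv : V G -> V G) (fe : E G -> E G) (b : pt S G -> pt S G) : is_iso fv fe ->
  (forall e z, b (cls (e, z)) = cls (fe e, z)) -> b = bmap fe.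
Proof.
move=> h hb; apply: functional_extensionality => p.
have [[e z] ->] := pt_cls p; by rewrite hb (bmap_cls h).
Qed.

Lemma bmap_cont (fv : V G -> V G) (fe : E G -> E G) : is_iso fv fe -> continuous_pt (bmap fe).
Proof.
move=> h U hU w hw; rewrite (bmap_cls h) in hw.
have [n hn] := hU _ hw; exists n => w' hw'.
rewrite (bmap_cls h); apply: hn.
by move: hw'; rewrite /Defs.prefix /omap /=; case=> -> ->.
Qed.

Lemma bmap_comp (fv fv' : V G -> V G) (fe fe' : E G -> E G) : is_iso fv fe -> is_iso fv' fe' ->
  bmap fe \o bmap fe' = bmap (fe \o fe').
Proof.
move=> h h'; have h2 : is_iso (fv \o fv') (fe \o fe').
  case: h h' => b1 b2 s1 t1 [b3 b4 s2 t2]; split; try exact: bij_comp.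
    by move=> e /=; rewrite s1 s2.
  by move=> e /=; rewrite t1 t2.
apply: functional_extensionality => p.
have [[e z] ->] := pt_cls p; by rewrite /= !(bmap_cls h') !(bmap_cls h) (bmap_cls h2).
Qed.

Lemma iso_comp (fv fv' : V G -> V G) (fe fe' : E G -> E G) : is_iso fv fe -> is_iso fv' fe' -> is_iso (fv \o fv') (fe \o fe').
Proof.
case=> b1 b2 s1 t1 [b3 b4 s2 t2]; split; try exact: bij_comp.
  by move=> e /=; rewrite s1 s2.
by move=> e /=; rewrite t1 t2.
Qed.

Lemma iso_inv (fv : V G -> V G) (fe : E G -> E G) : is_iso fv fe -> exists gv ge, is_iso gv ge /\
  cancel fe ge /\ cancel ge fe /\ cancel fv gv /\ cancel gv fv.
Proof.
case=> [[gv c1 c2] [ge c3 c4] hs ht]; exists gv, ge; split => //.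
split; [exact: (Bijective c2 c1) | exact: (Bijective c4 c3) | |].
  by move=> e; apply: (can_inj c1); rewrite -hs c4 c2.
by move=> e; apply: (can_inj c1); rewrite -ht c4 c2.
Qed.

Lemma bmap_id : bmap id = id.
Proof.
apply: functional_extensionality => p.
have h : is_iso (@id (V G)) (@id (E G)) by split => //; exists id.
by have [w ->] := pt_cls p; rewrite (bmap_cls h); case: w.
Qed.

End Auto.

Lemma bmap_inv (S : rsystem) (G : graph) (fv : V G -> V G) fe : is_iso fv fe ->
  exists gv ge, is_iso gv ge /\ @bmap S G ge \o @bmap S G fe = id /\ @bmap S G fe \o @bmap S G ge = id.
Proof.
move=> h; have [gv [ge [h' [d1 [d2 _]]]]] := iso_inv h.
exists gv, ge; split => //; split.
  rewrite (bmap_comp S h' h) (_ : ge \o fe = id) ?(bmap_id S G) //.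
  by apply: functional_extensionality => x /=; rewrite d1.
rewrite (bmap_comp S h h') (_ : fe \o ge = id) ?(bmap_id S G) //.
by apply: functional_extensionality => x /=; rewrite d2.
Qed.

Lemma mem_In (T : eqType) (x : T) (s : seq T) : x \in s -> List.In x s.
Proof. by elim: s => //= a s IH; rewrite in_cons => /orP [/eqP ->|/IH]; [left|right]. Qed.

End W2.
Import W2.

Module W3.


Section Rearr.
Variable S : rsystem.
Local Notation R := (Rg S).
Hypothesis ex : expanding S.

Lemma loop_ext (G G' : graph) (w : word S G) (w' : word S G') t :
  (is_loop w <-> is_loop w') ->
  (is_loop ((w.1, w.2 ++ t) : word S G) <-> is_loop ((w'.1, w'.2 ++ t) : word S G')).
Proof.
case: w => e s; case: w' => e' s' /= h.
case/lastP: t => [|t z]; first by rewrite !cats0.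
by rewrite -!rcons_cat !(loop_rcons ex).
Qed.

Lemma loop_map (G : graph) (fv : V G -> V G) fe (h : is_iso fv fe) (e : E G) s :
  is_loop ((fe e, s) : word S G) <-> is_loop ((e, s) : word S G).
Proof.
rewrite /is_loop !(xend_map h); split; last by move=> ->.
exact: (mapx_inj h).
Qed.

Lemma app_nil (z : nat -> E R) : app [::] z = z.
Proof. by apply: functional_extensionality => i; rewrite /app /= subn0. Qed.

Lemma cells_distinct (G : graph) (e1 e2 : E G) :
  (forall z, cls ((e1, z) : Omega S G) = cls ((e2, z) : Omega S G)) -> e1 = e2.
Proof.
move=> H; have [z Hz] := generic ex (((e2, [::]) : word S G)).
have := Hz ((e1, [::]) : word S G) z (leqnn 0).
rewrite /wconcat /= -/(app [::] z) app_nil => /(_ (esym (H z))) [] //.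
Qed.

Variables (G1 G : graph) (f : pt S G1 -> pt S G) (finv : pt S G -> pt S G1).
Hypotheses (hf : rearrangement f) (c1 : cancel f finv) (c2 : cancel finv f)
  (cf : continuous_pt f) (cfi : continuous_pt finv).

Lemma conj_rearr (fv : V G -> V G) fe : is_iso fv fe ->
  rearrangement (finv \o bmap fe \o f).
Proof.
move=> h; split.
  have [gv [ge [h' [d1 [d2 _]]]]] := iso_inv h.
  have bid1 : @bmap S G ge \o @bmap S G fe = id.
    rewrite (bmap_comp S h' h) (_ : ge \o fe = id) ?(bmap_id S G) //.
    by apply: functional_extensionality => x /=; rewrite d1.
  have bid2 : @bmap S G fe \o @bmap S G ge = id.
    rewrite (bmap_comp S h h') (_ : fe \o ge = id) ?(bmap_id S G) //.
    by apply: functional_extensionality => x /=; rewrite d2.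
  exists (finv \o bmap ge \o f); split.
  - by move=> p /=; rewrite c2; move: (congr1 (fun F => F (f p)) bid1) => /= ->.
  - by move=> p /=; rewrite c2; move: (congr1 (fun F => F (f p)) bid2) => /= ->.
  - move=> U hU; exact: (cf (@bmap_cont S G _ _ h _ (cfi hU))).
  - move=> U hU; exact: (cf (@bmap_cont S G _ _ h' _ (cfi hU))).
case: hf => _ [k [c [cov _ lp can]]].
set M1 := \max_(i < k) size (c i).1.2.
set M2 := \max_(i < k) size (c i).2.2.
set D := M1 + M2.
pose T := (E G1 * D.-tuple (E R))%type.
pose dw (t : T) : word S G1 := (t.1, val t.2).
have H : forall t : T, exists u : word S G1, (is_loop (dw t) <-> is_loop u) /\
    forall z, (finv \o bmap fe \o f) (cls (wconcat (dw t) z)) = cls (wconcat u z).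
  move=> [e tt]; rewrite /dw /=; set s := val tt.
  have hs : size s = D := size_tuple tt.
  have [z0 Hz0] := generic ex ((e, s) : word S G1).
  have [i [y hy]] := cov (cls (wconcat (e, s) z0)).
  have hm : size (c i).1.2 <= M1 by exact: (leq_bigmax (F := fun i => size (c i).1.2) i).
  have hD : size (c i).1.2 <= size s by rewrite hs; exact: leq_trans hm (leq_addr _ _).
  have [E1 E2] := Hz0 (c i).1 y hD hy; rewrite /= in E1 E2.
  set t1 := drop (size (c i).1.2) s.
  have es : s = (c i).1.2 ++ t1 by rewrite [X in X ++ _]E2 cat_take_drop.
  have ht1 : M2 <= size t1 by rewrite size_drop hs; lia.
  have step1 : forall z, f (cls (wconcat ((e, s) : word S G1) z)) =
      cls (wconcat (((c i).2.1, (c i).2.2 ++ t1) : word S G) z).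
    move=> z; rewrite {1}es -E1 !wconcat_cat; exact: can.
  set u' := ((fe (c i).2.1, (c i).2.2 ++ t1) : word S G).
  have [z1 Hz1] := generic ex u'.
  have [j [y' hy']] := cov (finv (cls (wconcat u' z1))).
  have hq : cls (wconcat u' z1) = cls (wconcat (c j).2 y').
    by rewrite -(c2 (cls (wconcat u' z1))) hy' can.
  have hm2 : size (c j).2.2 <= size u'.2.
    apply: leq_trans (_ : M2 <= _); first exact: (leq_bigmax (F := fun i => size (c i).2.2) j).
    by rewrite /u' /= size_cat (leq_trans ht1) // leq_addl.
  have [F1 F2] := Hz1 (c j).2 y' hm2 hq; rewrite /= in F1 F2.
  set t2 := drop (size (c j).2.2) u'.2.
  have es2 : u'.2 = (c j).2.2 ++ t2 by rewrite [X in X ++ _]F2 cat_take_drop.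
  have hu' : u' = ((c j).2.1, (c j).2.2 ++ t2) by rewrite F1 -es2.
  exists (((c j).1.1, (c j).1.2 ++ t2) : word S G1); split.
    rewrite {1}es -E1 (loop_ext t1 (lp i)) -(loop_map h) -/u' hu'.
    by rewrite -(loop_ext t2 (lp j)).
  move=> z /=; rewrite step1 (bmap_cls h) (_ : W2.omap fe _ = wconcat u' z) //.
  by rewrite hu' !wconcat_cat -can c1.
have [cu Hcu] : exists cu : T -> word S G1, forall t, (is_loop (dw t) <-> is_loop (cu t)) /\
    forall z, (finv \o bmap fe \o f) (cls (wconcat (dw t) z)) = cls (wconcat (cu t) z).
  exists (fun t => proj1_sig (constructive_indefinite_description _ (H t))) => t.
  exact: (proj2_sig (constructive_indefinite_description _ (H t))).
exists #|{: E G1 * D.-tuple (E R)}|, (fun i => (dw (enum_val i), cu (enum_val i))); split.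
- move=> p; have [w ->] := pt_cls p.
  pose tt : D.-tuple (E R) := Tuple (introT eqP (size_mkseq w.2 D)).
  exists (enum_rank ((w.1, tt) : T)); rewrite /= enum_rankK.
  exists (fun i => w.2 (i + D)).
  by rewrite -{1}(wconcat_prefix w D).
- move=> i j hij p [hi hj]; apply: (interior_disj _ _ hi hj).
    by rewrite /dw /= !size_tuple.
  move=> E0; move/negP: hij; apply; apply/eqP; apply: enum_val_inj.
  move: E0; rewrite /dw; case: (enum_val i) => a ta; case: (enum_val j) => a' ta' /=.
  by case=> -> /val_inj ->.
- by move=> i; case: (Hcu (enum_val i)).
- by move=> i z; case: (Hcu (enum_val i)).
Qed.

End Rearr.

End W3.
Import W3.

Module W4.


Lemma main_aux (S : rsystem) :
  expanding S ->
  forall (G : graph) (f : pt S (G0 S) -> pt S G),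
    rearrangement f ->
    (exists s : list (pt S (G0 S) -> pt S (G0 S)),
        forall g, stab f g -> List.In g s) /\
    (no_isolated G ->
     exists Phi : (pt S (G0 S) -> pt S (G0 S)) -> ((V G -> V G) * (E G -> E G)),
       [/\ forall g, stab f g -> is_iso (Phi g).1 (Phi g).2,
           forall g h, stab f g -> stab f h -> Phi g = Phi h -> g = h,
           forall fv fe, is_iso fv fe -> exists g, stab f g /\ Phi g = (fv, fe)
         & forall g h, stab f g -> stab f h ->
             Phi (g \o h) = ((Phi g).1 \o (Phi h).1, (Phi g).2 \o (Phi h).2)]).
Proof.
move=> ex G f hf.
have [finv [c1 c2 cf cfi]] := hf.1.
pose Q (g : pt S (G0 S) -> pt S (G0 S)) (fv : V G -> V G) (fe : E G -> E G) :=
  is_iso fv fe /\ f \o g = bmap fe \o f.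
have stabQ : forall g, stab f g -> exists fv fe, Q g fv fe.
  move=> g [_ [b [[fv [fe [h hb]]] E]]].
  have eb := base_eq h hb; subst b.
  have [gv [ge [h' [i1 i2]]]] := bmap_inv S h.
  exists gv, ge; split => //.
  apply: functional_extensionality => p /=.
  by rewrite {2}E /=; move: (congr1 (fun F => F (f (g p))) i1).
have QuniqG : forall g g' (fv fv' : V G -> V G) (fe : E G -> E G), Q g fv fe -> Q g' fv' fe -> g = g'.
  move=> g g' fv fv' fe; rewrite /Q => -[_ E] [_ E']; apply: functional_extensionality => p.
  by rewrite -(c1 (g p)) -(c1 (g' p)); move: (congr1 (fun F => F p) E) (congr1 (fun F => F p) E') => /= -> ->.
have Quniq : no_isolated G -> forall g (fv fv' : V G -> V G) (fe fe' : E G -> E G), Q g fv fe -> Q g fv' fe' -> fv = fv' /\ fe = fe'.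
  move=> noi g fv fv' fe fe'; rewrite /Q => -[h E] [h' E'].
  have eb : bmap fe = bmap fe' :> (pt S G -> pt S G).
    apply: functional_extensionality => q; rewrite -(c2 q).
    by move: (congr1 (fun F => F (finv q)) E) (congr1 (fun F => F (finv q)) E') => /= <- <-.
  have efe : fe = fe'.
    apply: functional_extensionality => e; apply: (cells_distinct ex) => z.
    move: (congr1 (fun F => F (cls ((e, z) : Omega S G))) eb) => /=.
    by rewrite (bmap_cls h) (bmap_cls h').
  subst fe'; split => //.
  apply: functional_extensionality => x.
  have [e [<-|<-]] := edge_at (noi x).
    by case: h => _ _ <- _; case: h' => _ _ <- _.
  by case: h => _ _ _ <-; case: h' => _ _ _ <-.
split.
  pose pickg (F : {ffun E G -> E G}) := epsilon (inhabits id) (fun g => exists fv, Q g fv (fun x => F x)).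
  exists (map pickg (enum {ffun E G -> E G})) => g hg.
  have [fv [fe hQ]] := stabQ g hg.
  pose F := [ffun x => fe x].
  have eF : (fun x => F x) = fe by apply: functional_extensionality => x; rewrite ffunE.
  have hp : exists fv, Q (pickg F) fv (fun x => F x).
    by apply: (epsilon_spec _ (fun g => exists fv, Q g fv (fun x => F x))); exists g, fv; rewrite eF.
  have -> : g = pickg F.
    case: hp => fv' hp; rewrite eF in hp; exact: QuniqG hQ hp.
  by apply: List.in_map; apply: mem_In; rewrite mem_enum.
move=> noi.
pose Phi g := epsilon (inhabits (@id (V G), @id (E G))) (fun ph => Q g ph.1 ph.2).
have PhiQ : forall g, stab f g -> Q g (Phi g).1 (Phi g).2.
  move=> g hg; have [fv [fe hQ]] := stabQ g hg.
  by apply: (epsilon_spec _ (fun ph => Q g ph.1 ph.2)); exists (fv, fe).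
have PhiE : forall g fv fe, Q g fv fe -> Phi g = (fv, fe).
  move=> g fv fe hQ.
  have hQ' : Q g (Phi g).1 (Phi g).2.
    by apply: (epsilon_spec _ (fun ph => Q g ph.1 ph.2)); exists (fv, fe).
  have [e1 e2] := Quniq noi _ _ _ _ _ hQ' hQ.
  by rewrite -e1 -e2; case: (Phi g).
exists Phi; split.
- by move=> g hg; have := PhiQ g hg; rewrite /Q => -[].
- move=> g h hg hh E; have := PhiQ h hh; rewrite -E => hQ.
  exact: QuniqG (PhiQ g hg) hQ.
- move=> fv fe h.
  have [gv [ge [h' [i1 i2]]]] := bmap_inv S h.
  have hQ : Q (finv \o bmap fe \o f) fv fe.
    split => //; apply: functional_extensionality => p /=; by rewrite c2.
  have hs : stab f (finv \o bmap fe \o f).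
    split; first exact: (conj_rearr ex hf c1 c2 cf cfi h).
    exists (bmap ge); split; first exact: (@bmap_base S G gv ge h').
    move: hQ; rewrite /Q => -[_ E]; apply: functional_extensionality => p.
    by move: (congr1 (fun F => F p) E) (congr1 (fun F => F (f p)) i1) => /= -> ->.
  by exists (finv \o bmap fe \o f); split => //; apply: PhiE.
- move=> g h hg hh.
  have := PhiQ g hg; rewrite /Q => -[hg1 Eg]; have := PhiQ h hh; rewrite /Q => -[hh1 Eh].
  apply: PhiE; split; first exact: iso_comp.
  rewrite -(bmap_comp S hg1 hh1); apply: functional_extensionality => p /=.
  by move: (congr1 (fun F => F (h p)) Eg) (congr1 (fun F => F p) Eh) => /= -> ->.
Qed.

End W4.
Import W4.

From Stdlib Require Import List.

Theorem proposition3p10 (S : rsystem) :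
  expanding S ->
  forall (G : graph) (f : pt S (G0 S) -> pt S G),
    rearrangement f ->
    (* properness: vertex stabilizers are finite *)
    (exists s : list (pt S (G0 S) -> pt S (G0 S)),
        forall g, stab f g -> In g s) /\
    (* the stabilizer of [f] is isomorphic to Aut(G) *)
    (no_isolated G ->
     exists Phi : (pt S (G0 S) -> pt S (G0 S)) -> ((V G -> V G) * (E G -> E G)),
       [/\ forall g, stab f g -> is_iso (Phi g).1 (Phi g).2,
           forall g h, stab f g -> stab f h -> Phi g = Phi h -> g = h,
           forall fv fe, is_iso fv fe -> exists g, stab f g /\ Phi g = (fv, fe)
         & forall g h, stab f g -> stab f h ->
             Phi (g \o h) = ((Phi g).1 \o (Phi h).1, (Phi g).2 \o (Phi h).2)]).
Proof. exact: main_aux. Qed.
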